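(* Assume $\delta_s\ge\delta_M$, let $\theta>0$ satisfy $\mathcal R(\theta)<1$, and let $\alpha>0$, $\beta_s>0$. Then $\mathbf 0\in\mathcal D'$ is globally asymptotically stable in $\mathcal D'=[0,+\infty)^4$ (in the Filippov sense) for the closed-loop system $$\dot E=\beta_E F\Big(1-\frac EK\Big)-(\nu_E+\delta_E)E,\quad \dot M=(1-\nu)\nu_E E-\delta_M M,\quad \dot F=\nu\nu_E E\frac{M}{M+\gamma_sM_s}-\delta_F F,\quad \dot M_s=u(E,M,F,M_s)-\delta_sM_s,$$ where $u=\max(0,G)$ is the feedback defined below.
   Context: Parameters: $\beta_E,\nu_E,\delta_E,\delta_M,\delta_F,\delta_s,K>0$, $\nu\in(0,1)$, $\gamma_s\in(0,1]$. $\mathcal R_0:=\dfrac{\beta_E\nu\nu_E}{\delta_F(\nu_E+\delta_E)}$, $\mathcal R(\theta):=\dfrac{\mathcal R_0}{1+\gamma_s\theta}$, $\psi:=\dfrac{2\beta_E\nu\nu_E}{\delta_F(1-\mathcal R(\theta))(1+\gamma_s\theta)}$. Define $G:\mathcal D'\to\mathbb R$ by $G=0$ if $M+M_s=0$ and otherwise $$G=\frac{\gamma_s\psi E(\theta M+M_s)^2}{\alpha(M+\gamma_sM_s)(3\theta M+M_s)}+\frac{\big((1-\nu)\nu_E\theta E-\theta\delta_MM\big)(\theta M+3M_s)}{3\theta M+M_s}+\delta_sM_s+\frac{\beta_s}{\alpha}(\theta M-M_s),$$ and $u:=\max(0,G)$ (so $u\ge0$, $u\in L^\infty_{loc}(\mathcal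 D')$). With $X(z)$ the closed-loop right-hand side (its value on the null set $\{M=M_s=0\}$ being irrelevant), Filippov solutions are locally Lipschitz curves $z:I\to\mathcal D'$ such that for a.e. $t$, $\dot z(t)\in\bigcap_{\varepsilon>0}\bigcap_{N}\overline{\mathrm{conv}}\,X\big(((z(t)+\varepsilon B)\cap\mathcal D')\setminus N\big)$, with $B$ the unit ball of $\mathbb R^4$ and $N$ ranging over Lebesgue-null sets. $\mathbf 0$ is globally asymptotically stable in $\mathcal S\subset\mathcal D'$ if (stability) for every $\varepsilon>0$ there is $\delta>0$ such that every Filippov solution with $z(0)\in\mathcal S$, $\|z(0)\|<\delta$ satisfies $\|z(t)\|<\varepsilon$ for all $t>0$, and (attractivity) every Filippov solution with $z(0)\in\mathcal S$ tends to $\mathbf 0$. *)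

(* Defs.v *)
From Stdlib Require Import Reals.
Open Scope R_scope.

Record Params := mkParams {
  betaE : R; nuE : R; deltaE : R; deltaM : R; deltaF : R; deltas : R; K : R;
  nu : R; gammas : R }.

Definition params_ok (p : Params) : Prop :=
  0 < betaE p /\ 0 < nuE p /\ 0 < deltaE p /\ 0 < deltaM p /\ 0 < deltaF p /\
  0 < deltas p /\ 0 < K p /\ 0 < nu p < 1 /\ 0 < gammas p <= 1.

Record V4 := mkV { vE : R; vM : R; vF : R; vMs : R }.

Definition vadd (x y : V4) : V4 :=
  mkV (vE x + vE y) (vM x + vM y) (vF x + vF y) (vMs x + vMs y).
Definition vscale (a : R) (x : V4) : V4 :=
  mkV (a * vE x) (a * vM x) (a * vF x) (a * vMs x).
Definition vsub (x y : V4) : V4 := vadd x (vscale (-1) y).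
Definition vzero : V4 := mkV 0 0 0 0.

Definition vnorm (x : V4) : R :=
  sqrt (vE x ^ 2 + vM x ^ 2 + vF x ^ 2 + vMs x ^ 2).

Definition Dp (x : V4) : Prop :=
  0 <= vE x /\ 0 <= vM x /\ 0 <= vF x /\ 0 <= vMs x.

Definition R0 (p : Params) : R :=
  betaE p * nu p * nuE p / (deltaF p * (nuE p + deltaE p)).
Definition Rth (p : Params) (theta : R) : R := R0 p / (1 + gammas p * theta).
Definition psi (p : Params) (theta : R) : R :=
  2 * betaE p * nu p * nuE p /
  (deltaF p * (1 - Rth p theta) * (1 + gammas p * theta)).

Definition G (p : Params) (theta alpha betas : R) (x : V4) : R :=
  let E := vE x in let M := vM x in let Ms := vMs x in
  if Req_EM_T (M + Ms) 0 then 0 else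
    gammas p * psi p theta * E * (theta * M + Ms) ^ 2
      / (alpha * (M + gammas p * Ms) * (3 * theta * M + Ms))
    + ((1 - nu p) * nuE p * theta * E - theta * deltaM p * M) * (theta * M + 3 * Ms)
      / (3 * theta * M + Ms)
    + deltas p * Ms
    + betas / alpha * (theta * M - Ms).

Definition u (p : Params) (theta alpha betas : R) (x : V4) : R :=
  Rmax 0 (G p theta alpha betas x).

(* Closed-loop right-hand side; the value of the ratio M/(M+gammas Ms) on the
   (Lebesgue-null) set {M = Ms = 0} is irrelevant and fixed to 0. *)
Definition Xcl (p : Params) (theta alpha betas : R) (x : V4) : V4 :=
  let E := vE x in let M := vM x in let F := vF x in let Ms := vMs x in
  mkV (betaE p * F * (1 - E / K p) - (nuE p + deltaE p) * E)
      ((1 - nu p) * nuE p * E - deltaM p * M)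
      (nu p * nuE p * E * (if Req_EM_T (M + Ms) 0 then 0 else M / (M + gammas p * Ms))
        - deltaF p * F)
      (u p theta alpha betas x - deltas p * Ms).

Definition null1 (N : R -> Prop) : Prop :=
  forall eps, 0 < eps ->
  exists a b : nat -> R,
    (forall n, a n <= b n) /\
    (forall t, N t -> exists n, a n <= t <= b n) /\
    (forall n, sum_f_R0 (fun k => b k - a k) n < eps).

Definition in_box (lo hi x : V4) : Prop :=
  vE lo <= vE x <= vE hi /\ vM lo <= vM x <= vM hi /\
  vF lo <= vF x <= vF hi /\ vMs lo <= vMs x <= vMs hi.
Definition box_vol (lo hi : V4) : R :=
  (vE hi - vE lo) * (vM hi - vM lo) * (vF hi - vF lo) * (vMs hi - vMs lo).

Definition null4 (N : V4 -> Prop) : Prop :=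
  forall eps, 0 < eps ->
  exists lo hi : nat -> V4,
    (forall n, vE (lo n) <= vE (hi n) /\ vM (lo n) <= vM (hi n) /\
               vF (lo n) <= vF (hi n) /\ vMs (lo n) <= vMs (hi n)) /\
    (forall x, N x -> exists n, in_box (lo n) (hi n) x) /\
    (forall n, sum_f_R0 (fun k => box_vol (lo k) (hi k)) n < eps).

Definition convex (C : V4 -> Prop) : Prop :=
  forall x y l, C x -> C y -> 0 <= l <= 1 ->
    C (vadd (vscale l x) (vscale (1 - l) y)).
Definition closed4 (C : V4 -> Prop) : Prop :=
  forall x, (forall e, 0 < e -> exists y, C y /\ vnorm (vsub y x) < e) -> C x.
Definition clconv (S : V4 -> Prop) (v : V4) : Prop :=
  forall C, convex C -> closed4 C -> (forall y, S y -> C y) -> C v.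

Definition filippov_set (X : V4 -> V4) (x : V4) (v : V4) : Prop :=
  forall eps N, 0 < eps -> null4 N ->
    clconv (fun w => exists y, Dp y /\ vnorm (vsub y x) <= eps /\ ~ N y /\ w = X y) v.

Definition has_deriv (z : R -> V4) (t : R) (d : V4) : Prop :=
  derivable_pt_lim (fun s => vE (z s)) t (vE d) /\
  derivable_pt_lim (fun s => vM (z s)) t (vM d) /\
  derivable_pt_lim (fun s => vF (z s)) t (vF d) /\
  derivable_pt_lim (fun s => vMs (z s)) t (vMs d).

Definition filippov_solution (X : V4 -> V4) (z : R -> V4) : Prop :=
  (forall t, 0 <= t -> Dp (z t)) /\
  (forall T, 0 < T -> exists L, forall s t, 0 <= s <= T -> 0 <= t <= T ->
      vnorm (vsub (z s) (z t)) <= L * Rabs (s - t)) /\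
  null1 (fun t => 0 <= t /\
      ~ (exists d, has_deriv z t d /\ filippov_set X (z t) d)).

Definition GAS_filippov (X : V4 -> V4) (S : V4 -> Prop) : Prop :=
  (forall eps, 0 < eps -> exists delta, 0 < delta /\
     forall z, filippov_solution X z -> S (z 0) -> vnorm (z 0) < delta ->
       forall t, 0 < t -> vnorm (z t) < eps) /\
  (forall z, filippov_solution X z -> S (z 0) ->
     forall eps, 0 < eps -> exists T, forall t, T <= t -> vnorm (z t) < eps).

(* Main.v *)
Require Import Defs.
From Stdlib Require Import Reals Lra Classical.
Open Scope R_scope.

Definition null1' (N : R -> Prop) : Prop :=
  forall eps, 0 < eps ->
  exists a b : nat -> R,
    (forall n, a n <= b n) /\
    (forall t, N t -> exists n, a n <= t <= b n) /\
    (forall n, sum_f_R0 (fun k => b k - a k) n < eps).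

Lemma geom_sum n : sum_f_R0 (fun k => (/2) ^ (S k)) n = 1 - (/2)^(S n).
Proof.
  induction n. simpl. field. rewrite tech5, IHn. simpl. field.
Qed.

Lemma pow_half_pos k : 0 < (/2) ^ k.
Proof. apply pow_lt; lra. Qed.

Section MonoS.
Variables (W : R -> R) (a b L eps : R) (N : R -> Prop).
Variables (an bn : nat -> R).
Hypothesis Hab : a <= b.
Hypothesis HL : 0 <= L.
Hypothesis Heps : 0 < eps.
Hypothesis Hlip : forall s t, a <= s <= b -> a <= t <= b -> Rabs (W s - W t) <= L * Rabs (s - t).
Hypothesis Hle : forall n, an n <= bn n.
Hypothesis Hcov : forall t, N t -> exists n, an n <= t <= bn n.
Hypothesis Hsum : forall n, sum_f_R0 (fun k => bn k - an k) n < eps.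
Hypothesis Hgood : forall t, a <= t <= b -> ~ N t -> exists D, derivable_pt_lim W t D /\ D <= 0.

Let A' k := an k - eps * (/2)^(S k).
Let B' k := bn k + eps * (/2)^(S k).
Let len k s := Rmax 0 (Rmin (B' k) s - A' k).
Let Dn n s := sum_f_R0 (fun k => len k s - len k a) n.

Lemma len_mono k s t : t <= s -> len k t <= len k s.
Proof.
  intro. unfold len. apply Rle_max_compat_l.
  assert (Rmin (B' k) t <= Rmin (B' k) s).
  { unfold Rmin. destruct (Rle_dec (B' k) t), (Rle_dec (B' k) s); lra. }
  lra.
Qed.

Lemma len_ge0 k s : 0 <= len k s.
Proof. unfold len. apply Rmax_l. Qed.

Lemma len_le k s : len k s <= B' k - A' k.
Proof.
  unfold len. apply Rmax_lub.
  - unfold B', A'. generalize (Hle k) (pow_half_pos (S k)). intros. nra.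
  - generalize (Rmin_l (B' k) s). lra.
Qed.

Lemma len_in k s t : A' k < t -> t <= s -> s <= B' k -> len k s - len k t = s - t.
Proof.
  intros. unfold len. rewrite !Rmin_right by lra.
  rewrite !Rmax_right by lra. lra.
Qed.

Lemma Dn_mono_s n s t : t <= s -> Dn n t <= Dn n s.
Proof.
  intro. unfold Dn. induction n; simpl.
  - generalize (len_mono 0 s t H). lra.
  - generalize (len_mono (S n) s t H). lra.
Qed.

Lemma Dn_mono_n n m s : a <= s -> (n <= m)%nat -> Dn n s <= Dn m s.
Proof.
  intros Ha Hnm. induction Hnm. lra.
  unfold Dn in *. simpl. generalize (len_mono (S m) s a Ha). lra.
Qed.

Lemma Dsum_nonneg n s t : t <= s -> sum_f_R0 (fun k0 => len k0 s - len k0 a) n -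
              sum_f_R0 (fun k0 => len k0 t - len k0 a) n >= 0.
Proof.
  intro Hts. induction n; simpl. generalize (len_mono 0 s t Hts). lra.
  generalize (len_mono (S n) s t Hts). lra.
Qed.

Lemma Dn_jump n k s t : (k <= n)%nat -> t <= s -> A' k < t -> s <= B' k ->
  Dn n s - Dn n t >= s - t.
Proof.
  intros Hk Hts HA HB. unfold Dn. induction n.
  - inversion Hk; subst. simpl. generalize (len_in 0 s t HA Hts HB). lra.
  - inversion Hk; subst.
    + simpl. generalize (len_in (S n) s t HA Hts HB).
      assert (sum_f_R0 (fun k0 => len k0 s - len k0 a) n -
              sum_f_R0 (fun k0 => len k0 t - len k0 a) n >= 0).
      { apply Dsum_nonneg; auto. }
      lra.
    + simpl. specialize (IHn H0). generalize (len_mono (S n) s t Hts). lra.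
Qed.

Lemma Dn_bound n s : Dn n s <= 3 * eps.
Proof.
  assert (forall n, sum_f_R0 (fun k => len k s) n <= 3 * eps - 2 * eps * (/2)^(S n)).
  { intro m. assert (Hs := Hsum m). assert (Hg := geom_sum m).
    assert (sum_f_R0 (fun k => len k s) m <=
      sum_f_R0 (fun k => bn k - an k) m + 2 * eps * sum_f_R0 (fun k => (/2)^(S k)) m).
    { clear Hs Hg. induction m.
      - simpl. generalize (len_le 0 s). unfold B', A'. simpl. lra.
      - rewrite !tech5. generalize (len_le (S m) s). unfold B', A'. lra. }
    rewrite Hg in H. lra. }
  assert (forall n, sum_f_R0 (fun k => len k a) n >= 0).
  { induction n0; simpl. generalize (len_ge0 0 a); lra. generalize (len_ge0 (S n0) a); lra. }
  assert (Dn n s = sum_f_R0 (fun k => len k s) n - sum_f_R0 (fun k => len k a) n).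
  { unfold Dn. induction n; simpl. lra. rewrite IHn. lra. }
  rewrite H1. specialize (H n). specialize (H0 n). generalize (pow_half_pos (S n)). nra.
Qed.

Let P s := forall eta, 0 < eta -> exists n, W s <= W a + eps * (s - a) + L * Dn n s + eta.

Lemma Dn_a n : Dn n a = 0.
Proof. unfold Dn. induction n; simpl. lra. rewrite IHn. lra. Qed.

Lemma mono_core : W b <= W a + eps * (b - a) + L * (3 * eps) + eps.
Proof.
  set (Aset := fun s => a <= s <= b /\ forall r, a <= r <= s -> P r).
  assert (Pa : P a).
  { intros eta He. exists O. rewrite Dn_a. lra. }
  assert (Hb : bound Aset). { exists b. intros x [Hx _]. lra. }
  assert (Hne : exists x, Aset x).
  { exists a. split. lra. intros r Hr. replace r with a by lra. exact Pa. }
  destruct (completeness Aset Hb Hne) as [m [Hub Hleast]].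
  assert (Ham : a <= m). { apply Hub. destruct Hne. unfold Aset. split. lra.
    intros r Hr. replace r with a by lra. exact Pa. }
  assert (Hmb : m <= b). { apply Hleast. intros x [Hx _]. lra. }
  assert (C1 : forall r, a <= r < m -> P r).
  { intros r Hr. apply NNPP. intro HnP.
    assert (is_upper_bound Aset r).
    { intros x [Hx Hx2]. destruct (Rle_dec x r). auto. exfalso. apply HnP.
      apply Hx2. lra. }
    specialize (Hleast r H). lra. }
  assert (C2 : P m).
  { destruct (Req_dec m a) as [E|E]. { rewrite E. exact Pa. }
    intros eta He.
    set (r := Rmax a (m - eta / (2 * (L + 1)))).
    assert (Hr1 : a <= r) by apply Rmax_l.
    assert (Hr2 : r < m).
    { unfold r. apply Rmax_lub_lt. lra.
      assert (0 < eta / (2 * (L+1))) by (apply Rdiv_lt_0_compat; lra). lra. }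
    assert (Hr3 : m - r <= eta / (2 * (L + 1))).
    { unfold r. generalize (Rmax_r a (m - eta / (2 * (L + 1)))). lra. }
    destruct (C1 r (conj Hr1 Hr2) (eta/2) ltac:(lra)) as [n Hn].
    exists n.
    assert (Hl := Hlip m r ltac:(lra) ltac:(lra)).
    rewrite (Rabs_right (m - r)) in Hl by lra.
    assert (W m - W r <= eta / 2).
    { assert (L * (m - r) <= eta / 2).
      { apply Rle_trans with (L * (eta / (2 * (L+1)))). apply Rmult_le_compat_l; lra.
        assert (L/(L+1) <= 1).
        { apply Rmult_le_reg_r with (L+1). lra. unfold Rdiv. rewrite Rmult_assoc, Rinv_l by lra. lra. }
        assert (0 <= L/(L+1)) by (apply Rmult_le_pos; [lra| left; apply Rinv_0_lt_compat; lra]).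
        replace (L * (eta / (2*(L+1)))) with ((eta/2)*(L/(L+1))) by (field; lra). nra. }

      apply Rle_trans with (L * (m - r)); [|exact H].
      apply Rle_trans with (Rabs (W m - W r)). apply Rle_abs. exact Hl. }
    assert (Dn n r <= Dn n m) by (apply Dn_mono_s; lra).
    assert (L * Dn n r <= L * Dn n m) by (apply Rmult_le_compat_l; lra).
    assert (eps * (r - a) <= eps * (m - a)) by (apply Rmult_le_compat_l; lra).
    lra. }
  assert (Am : forall r, a <= r <= m -> P r).
  { intros r Hr. destruct (Req_dec r m). subst. exact C2. apply C1. lra. }
  destruct (Req_dec m b) as [Emb|Emb].
  { rewrite <- Emb. destruct (C2 eps Heps) as [n Hn].
    generalize (Dn_bound n m). intro. assert (L * Dn n m <= L * (3 * eps)) by (apply Rmult_le_compat_l; lra).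
    lra. }
  exfalso.
  assert (Hstep : exists d, 0 < d /\ m + d <= b /\ forall s, m < s <= m + d -> P s).
  { destruct (classic (N m)) as [HN|HN].
    - destruct (Hcov m HN) as [k Hk].
      assert (HA : A' k < m) by (unfold A'; generalize (pow_half_pos (S k)); nra).
      assert (HB : m < B' k) by (unfold B'; generalize (pow_half_pos (S k)); nra).
      exists (Rmin (B' k - m) (b - m)). split. apply Rmin_glb_lt; lra.
      split. generalize (Rmin_r (B' k - m) (b - m)); lra.
      intros s Hs. generalize (Rmin_r (B' k - m) (b - m)) (Rmin_l (B' k - m) (b - m)); intros.
      intros eta He. destruct (C2 eta He) as [n Hn].
      exists (max n k).
      assert (Dn (max n k) s - Dn (max n k) m >= s - m).
      { apply (Dn_jump (max n k) k). apply Nat.le_max_r. lra. lra. lra. }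
      assert (Dn n m <= Dn (max n k) m) by (apply Dn_mono_n; [lra| apply Nat.le_max_l]).
      assert (Hl := Hlip s m ltac:(lra) ltac:(lra)).
      rewrite (Rabs_right (s - m)) in Hl by lra.
      assert (W s - W m <= L * (s - m)) by (apply Rle_trans with (Rabs (W s - W m)); [apply Rle_abs|exact Hl]).
      assert (L * Dn n m + L * (s - m) <= L * Dn (max n k) s) by nra.
      assert (eps * (m - a) <= eps * (s - a)) by (apply Rmult_le_compat_l; lra).
      lra.
    - destruct (Hgood m ltac:(lra) HN) as [D [HD HD0]].
      destruct (HD eps Heps) as [del Hdel].
      exists (Rmin (del/2) (b - m)). assert (0 < del) by apply cond_pos.
      split. apply Rmin_glb_lt; lra.
      split. generalize (Rmin_r (del/2) (b - m)); lra.
      intros s Hs. generalize (Rmin_r (del/2) (b - m)) (Rmin_l (del/2) (b - m)); intros.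
      assert (Hq := Hdel (s - m) ltac:(lra) ltac:(rewrite Rabs_right; lra)).
      replace (m + (s - m)) with s in Hq by ring.
      assert (W s - W m <= eps * (s - m)).
      { assert ((W s - W m) / (s - m) < eps).
        { generalize (Rle_abs ((W s - W m) / (s - m) - D)). lra. }
        apply Rmult_lt_compat_r with (r := s - m) in H2; [|lra].
        unfold Rdiv in H2. rewrite Rmult_assoc, Rinv_l in H2 by lra. lra. }
      intros eta He. destruct (C2 eta He) as [n Hn]. exists n.
      assert (Dn n m <= Dn n s) by (apply Dn_mono_s; lra).
      assert (L * Dn n m <= L * Dn n s) by (apply Rmult_le_compat_l; lra).
      lra. }
  destruct Hstep as [d [Hd [Hdb Hs]]].
  assert (Aset (m + d)).
  { split. lra. intros r Hr. destruct (Rle_dec r m). apply Am; lra. apply Hs; lra. }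
  specialize (Hub _ H). lra.
Qed.
End MonoS.

Lemma mono_lemma (W : R -> R) (a b L : R) (N : R -> Prop) :
  a <= b -> 0 <= L ->
  (forall s t, a <= s <= b -> a <= t <= b -> Rabs (W s - W t) <= L * Rabs (s - t)) ->
  null1' N ->
  (forall t, a <= t <= b -> ~ N t -> exists D, derivable_pt_lim W t D /\ D <= 0) ->
  W b <= W a.
Proof.
  intros Hab HL Hlip HN Hg.
  assert (forall eps, 0 < eps -> W b <= W a + eps * (b - a + 3 * L + 1)).
  { intros eps He. destruct (HN eps He) as [an [bn [H1 [H2 H3]]]].
    generalize (mono_core W a b L eps N an bn Hab HL He Hlip H1 H2 H3 Hg). nra. }
  apply Rnot_lt_le. intro Hlt.
  set (eps := (W b - W a) / (2 * (b - a + 3 * L + 1))).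
  assert (0 < eps) by (unfold eps; apply Rdiv_lt_0_compat; lra).
  specialize (H eps H0). unfold eps in H.
  replace ((W b - W a) / (2 * (b - a + 3 * L + 1)) * (b - a + 3 * L + 1)) with ((W b - W a)/2) in H
    by (field; lra). lra.
Qed.

Lemma sq_le_vn a s : 0 <= s -> Rabs a <= sqrt (a ^ 2 + s).
Proof.
  intro. rewrite <- sqrt_Rsqr_abs. apply sqrt_le_1_alt. unfold Rsqr. simpl. lra.
Qed.

Lemma vE_le v : Rabs (vE v) <= vnorm v.
Proof. unfold vnorm. replace (vE v ^ 2 + vM v ^ 2 + vF v ^ 2 + vMs v ^ 2) with
  (vE v ^ 2 + (vM v ^ 2 + vF v ^ 2 + vMs v ^ 2)) by ring. apply sq_le_vn.
  generalize (pow2_ge_0 (vM v)) (pow2_ge_0 (vF v)) (pow2_ge_0 (vMs v)); lra. Qed.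
Lemma vM_le v : Rabs (vM v) <= vnorm v.
Proof. unfold vnorm. replace (vE v ^ 2 + vM v ^ 2 + vF v ^ 2 + vMs v ^ 2) with
  (vM v ^ 2 + (vE v ^ 2 + vF v ^ 2 + vMs v ^ 2)) by ring. apply sq_le_vn.
  generalize (pow2_ge_0 (vE v)) (pow2_ge_0 (vF v)) (pow2_ge_0 (vMs v)); lra. Qed.
Lemma vF_le v : Rabs (vF v) <= vnorm v.
Proof. unfold vnorm. replace (vE v ^ 2 + vM v ^ 2 + vF v ^ 2 + vMs v ^ 2) with
  (vF v ^ 2 + (vE v ^ 2 + vM v ^ 2 + vMs v ^ 2)) by ring. apply sq_le_vn.
  generalize (pow2_ge_0 (vE v)) (pow2_ge_0 (vM v)) (pow2_ge_0 (vMs v)); lra. Qed.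
Lemma vMs_le v : Rabs (vMs v) <= vnorm v.
Proof. unfold vnorm. replace (vE v ^ 2 + vM v ^ 2 + vF v ^ 2 + vMs v ^ 2) with
  (vMs v ^ 2 + (vE v ^ 2 + vM v ^ 2 + vF v ^ 2)) by ring. apply sq_le_vn.
  generalize (pow2_ge_0 (vE v)) (pow2_ge_0 (vM v)) (pow2_ge_0 (vF v)); lra. Qed.

Lemma vnorm_ge0 v : 0 <= vnorm v.
Proof. apply sqrt_pos. Qed.

Lemma vnorm_le_sum v : vnorm v <= Rabs (vE v) + Rabs (vM v) + Rabs (vF v) + Rabs (vMs v).
Proof.
  unfold vnorm. rewrite <- (sqrt_pow2 (Rabs (vE v) + Rabs (vM v) + Rabs (vF v) + Rabs (vMs v)))
    by (generalize (Rabs_pos (vE v)) (Rabs_pos (vM v)) (Rabs_pos (vF v)) (Rabs_pos (vMs v)); lra).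
  apply sqrt_le_1_alt.
  rewrite <- (pow2_abs (vE v)), <- (pow2_abs (vM v)), <- (pow2_abs (vF v)), <- (pow2_abs (vMs v)).
  generalize (Rabs_pos (vE v)) (Rabs_pos (vM v)) (Rabs_pos (vF v)) (Rabs_pos (vMs v)). nra.
Qed.

Lemma vsubE y x : vE (vsub y x) = vE y - vE x. Proof. unfold vsub, vadd, vscale; simpl; ring. Qed.
Lemma vsubM y x : vM (vsub y x) = vM y - vM x. Proof. unfold vsub, vadd, vscale; simpl; ring. Qed.
Lemma vsubF y x : vF (vsub y x) = vF y - vF x. Proof. unfold vsub, vadd, vscale; simpl; ring. Qed.
Lemma vsubMs y x : vMs (vsub y x) = vMs y - vMs x. Proof. unfold vsub, vadd, vscale; simpl; ring. Qed.

Lemma null4_empty : null4 (fun _ => False).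
Proof.
  intros eps He. exists (fun _ => vzero), (fun _ => vzero). split; [|split].
  - intros; simpl; lra.
  - intros x [].
  - intro n. cbv beta. assert (box_vol vzero vzero = 0) by (unfold box_vol; simpl; ring).
    rewrite H. assert (forall m, sum_f_R0 (fun _ => 0) m = 0).
    { induction m. reflexivity. rewrite tech5, IHm. ring. }
    rewrite H0. exact He.
Qed.

Definition lin (c1 c2 c3 c4 : R) (v : V4) : R :=
  c1 * vE v + c2 * vM v + c3 * vF v + c4 * vMs v.

Lemma lin_diff c1 c2 c3 c4 y x :
  Rabs (lin c1 c2 c3 c4 y - lin c1 c2 c3 c4 x) <=
  (Rabs c1 + Rabs c2 + Rabs c3 + Rabs c4) * vnorm (vsub y x).
Proof.
  unfold lin.
  replace (c1 * vE y + c2 * vM y + c3 * vF y + c4 * vMs y -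
     (c1 * vE x + c2 * vM x + c3 * vF x + c4 * vMs x)) with
    (c1 * vE (vsub y x) + c2 * vM (vsub y x) + c3 * vF (vsub y x) + c4 * vMs (vsub y x))
    by (rewrite vsubE, vsubM, vsubF, vsubMs; ring).
  set (v := vsub y x).
  generalize (vE_le v) (vM_le v) (vF_le v) (vMs_le v). intros.
  assert (forall c w, Rabs w <= vnorm v -> Rabs (c * w) <= Rabs c * vnorm v).
  { intros. rewrite Rabs_mult. apply Rmult_le_compat_l. apply Rabs_pos. auto. }
  generalize (H3 c1 _ H) (H3 c2 _ H0) (H3 c3 _ H1) (H3 c4 _ H2). intros.
  generalize (Rabs_triang (c1 * vE v + c2 * vM v + c3 * vF v) (c4 * vMs v))
    (Rabs_triang (c1 * vE v + c2 * vM v) (c3 * vF v))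
    (Rabs_triang (c1 * vE v) (c2 * vM v)). intros. nra.
Qed.

Definition convex_half c1 c2 c3 c4 r : convex (fun v => lin c1 c2 c3 c4 v <= r).
Proof.
  intros x y l Hx Hy Hl. unfold lin, vadd, vscale in *; simpl.
  replace (c1 * (l * vE x + (1 - l) * vE y) + c2 * (l * vM x + (1 - l) * vM y) +
    c3 * (l * vF x + (1 - l) * vF y) + c4 * (l * vMs x + (1 - l) * vMs y)) with
    (l * (c1 * vE x + c2 * vM x + c3 * vF x + c4 * vMs x) +
     (1 - l) * (c1 * vE y + c2 * vM y + c3 * vF y + c4 * vMs y)) by ring.
  nra.
Qed.

Lemma closed_half c1 c2 c3 c4 r : closed4 (fun v => lin c1 c2 c3 c4 v <= r).
Proof.
  intros x Hx. set (A := Rabs c1 + Rabs c2 + Rabs c3 + Rabs c4).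
  assert (0 <= A) by (unfold A; generalize (Rabs_pos c1) (Rabs_pos c2) (Rabs_pos c3) (Rabs_pos c4); lra).
  apply Rnot_lt_le. intro Hlt.
  set (e := (lin c1 c2 c3 c4 x - r) / (A + 1)).
  assert (0 < e) by (unfold e; apply Rdiv_lt_0_compat; lra).
  destruct (Hx e H0) as [y [Hy Hye]].
  assert (Hd := lin_diff c1 c2 c3 c4 y x). fold A in Hd.
  assert (A * vnorm (vsub y x) <= A * e) by (apply Rmult_le_compat_l; lra).
  assert (A * e < lin c1 c2 c3 c4 x - r).
  { unfold e. apply Rmult_lt_reg_r with (A + 1). lra.
    replace (A * ((lin c1 c2 c3 c4 x - r) / (A + 1)) * (A + 1)) with (A * (lin c1 c2 c3 c4 x - r))
      by (field; lra). nra. }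
  generalize (Rabs_minus_sym (lin c1 c2 c3 c4 y) (lin c1 c2 c3 c4 x)). intro.
  generalize (Rle_abs (lin c1 c2 c3 c4 x - lin c1 c2 c3 c4 y)). lra.
Qed.

Lemma filippov_lin X x d c1 c2 c3 c4 r :
  (forall eta, 0 < eta -> exists e, 0 < e /\ forall y, Dp y -> vnorm (vsub y x) <= e ->
     lin c1 c2 c3 c4 (X y) <= r + eta) ->
  filippov_set X x d -> lin c1 c2 c3 c4 d <= r.
Proof.
  intros H Hf. apply Rnot_lt_le. intro Hlt.
  set (eta := (lin c1 c2 c3 c4 d - r) / 2).
  assert (0 < eta) by (unfold eta; lra).
  destruct (H eta H0) as [e [He Hy]].
  assert (Hc := Hf e (fun _ => False) He null4_empty
    (fun v => lin c1 c2 c3 c4 v <= r + eta) (convex_half _ _ _ _ _) (closed_half _ _ _ _ _)).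
  cbv beta in Hc. assert (lin c1 c2 c3 c4 d <= r + eta).
  { apply Hc. intros w [y [Hy1 [Hy2 [_ Hw]]]]. subst w. apply Hy; auto. }
  unfold eta in H1. lra.
Qed.

Definition ctn (f : V4 -> R) (x : V4) : Prop :=
  forall eta, 0 < eta -> exists e, 0 < e /\ forall y, Dp y -> vnorm (vsub y x) <= e ->
    Rabs (f y - f x) <= eta.

Lemma ctn_const c x : ctn (fun _ => c) x.
Proof. intros eta He. exists 1. split. lra. intros. rewrite Rminus_diag, Rabs_R0. lra. Qed.

Lemma ctn_E x : ctn vE x.
Proof. intros eta He. exists eta. split. lra. intros. rewrite <- vsubE. generalize (vE_le (vsub y x)); lra. Qed.
Lemma ctn_M x : ctn vM x.
Proof. intros eta He. exists eta. split. lra. intros. rewrite <- vsubM. generalize (vM_le (vsub y x)); lra. Qed.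
Lemma ctn_F x : ctn vF x.
Proof. intros eta He. exists eta. split. lra. intros. rewrite <- vsubF. generalize (vF_le (vsub y x)); lra. Qed.
Lemma ctn_Ms x : ctn vMs x.
Proof. intros eta He. exists eta. split. lra. intros. rewrite <- vsubMs. generalize (vMs_le (vsub y x)); lra. Qed.

Lemma ctn_plus f g x : ctn f x -> ctn g x -> ctn (fun y => f y + g y) x.
Proof.
  intros Hf Hg eta He. destruct (Hf (eta/2) ltac:(lra)) as [e1 [He1 H1]].
  destruct (Hg (eta/2) ltac:(lra)) as [e2 [He2 H2]].
  exists (Rmin e1 e2). split. apply Rmin_glb_lt; lra. intros y Hy Hn.
  generalize (H1 y Hy ltac:(generalize (Rmin_l e1 e2); lra)) (H2 y Hy ltac:(generalize (Rmin_r e1 e2); lra)).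
  intros. replace (f y + g y - (f x + g x)) with ((f y - f x) + (g y - g x)) by ring.
  generalize (Rabs_triang (f y - f x) (g y - g x)). lra.
Qed.

Lemma ctn_opp f x : ctn f x -> ctn (fun y => - f y) x.
Proof.
  intros Hf eta He. destruct (Hf eta He) as [e [He1 H1]]. exists e. split. auto.
  intros. replace (- f y - - f x) with (- (f y - f x)) by ring. rewrite Rabs_Ropp. auto.
Qed.

Lemma ctn_minus f g x : ctn f x -> ctn g x -> ctn (fun y => f y - g y) x.
Proof. intros. apply (ctn_plus f (fun y => - g y)); auto. apply ctn_opp; auto. Qed.

Lemma ctn_mult f g x : ctn f x -> ctn g x -> ctn (fun y => f y * g y) x.
Proof.
  intros Hf Hg eta He.
  set (A := Rabs (f x) + Rabs (g x) + 1).
  assert (HA : 1 <= A) by (unfold A; generalize (Rabs_pos (f x)) (Rabs_pos (g x)); lra).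
  set (d := Rmin 1 (eta / (3 * A))).
  assert (Hd : 0 < d) by (unfold d; apply Rmin_glb_lt; [lra| apply Rdiv_lt_0_compat; lra]).
  assert (Hd1 : d <= 1) by apply Rmin_l.
  assert (Hd2 : d * (3 * A) <= eta).
  { unfold d. apply Rle_trans with (eta / (3 * A) * (3 * A)).
    apply Rmult_le_compat_r. lra. apply Rmin_r. right. field. lra. }
  destruct (Hf d Hd) as [e1 [He1 H1]]. destruct (Hg d Hd) as [e2 [He2 H2]].
  exists (Rmin e1 e2). split. apply Rmin_glb_lt; lra. intros y Hy Hn.
  generalize (H1 y Hy ltac:(generalize (Rmin_l e1 e2); lra)) (H2 y Hy ltac:(generalize (Rmin_r e1 e2); lra)).
  intros Ha Hb.
  replace (f y * g y - f x * g x) with ((f y - f x) * (g y - g x) + (f y - f x) * g x + f x * (g y - g x)) by ring.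
  set (u := f y - f x) in *. set (v := g y - g x) in *.
  generalize (Rabs_triang (u * v + u * g x) (f x * v)) (Rabs_triang (u * v) (u * g x)).
  rewrite !Rabs_mult. intros.
  generalize (Rabs_pos u) (Rabs_pos v) (Rabs_pos (f x)) (Rabs_pos (g x)). intros.
  assert (Rabs u * Rabs v <= d * d) by (apply Rmult_le_compat; lra).
  assert (Rabs u * Rabs (g x) <= d * Rabs (g x)) by (apply Rmult_le_compat_r; lra).
  assert (Rabs (f x) * Rabs v <= Rabs (f x) * d) by (apply Rmult_le_compat_l; lra).
  assert (d * d <= d) by nra.
  unfold A in Hd2. nra.
Qed.

Lemma ctn_inv f x : ctn f x -> f x <> 0 -> ctn (fun y => / f y) x.
Proof.
  intros Hf Hne eta He.
  set (a := Rabs (f x)). assert (Ha : 0 < a) by (apply Rabs_pos_lt; auto).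
  assert (Hp : 0 < eta * a * a / 2) by (apply Rdiv_lt_0_compat; [apply Rmult_lt_0_compat; [apply Rmult_lt_0_compat|]|]; lra).
  set (d := Rmin (a / 2) (eta * a * a / 2)).
  assert (Hd : 0 < d) by (unfold d; apply Rmin_glb_lt; lra).
  destruct (Hf d Hd) as [e [He1 H1]]. exists e. split. auto. intros y Hy Hn.
  specialize (H1 y Hy Hn).
  assert (Hd1 : d <= a / 2) by apply Rmin_l. assert (Hd2 : d <= eta * a * a / 2) by apply Rmin_r.
  assert (Hfy : a / 2 <= Rabs (f y)).
  { generalize (Rabs_triang_inv (f x) (f y)). rewrite <- Rabs_Ropp in H1.
    replace (- (f y - f x)) with (f x - f y) in H1 by ring. fold a. lra. }
  assert (f y <> 0) by (intro E; rewrite E, Rabs_R0 in Hfy; lra).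
  replace (/ f y - / f x) with ((f x - f y) / (f y * f x)) by (field; auto).
  unfold Rdiv. rewrite Rabs_mult, Rabs_inv, Rabs_mult. fold a.
  rewrite <- Rabs_Ropp. replace (- (f x - f y)) with (f y - f x) by ring.
  assert (0 < Rabs (f y) * a) by (apply Rmult_lt_0_compat; lra).
  apply Rmult_le_reg_r with (Rabs (f y) * a). auto.
  rewrite Rmult_assoc, Rinv_l by lra. rewrite Rmult_1_r.
  assert (a / 2 * a <= Rabs (f y) * a) by (apply Rmult_le_compat_r; lra).
  assert (eta * (a / 2 * a) <= eta * (Rabs (f y) * a)) by (apply Rmult_le_compat_l; lra).
  nra.
Qed.

Lemma ctn_div f g x : ctn f x -> ctn g x -> g x <> 0 -> ctn (fun y => f y / g y) x.
Proof. intros. apply (ctn_mult f (fun y => / g y)); auto. apply ctn_inv; auto. Qed.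

Lemma Rmax0_lip a b : Rabs (Rmax 0 a - Rmax 0 b) <= Rabs (a - b).
Proof.
  unfold Rmax. destruct (Rle_dec 0 a), (Rle_dec 0 b);
  unfold Rabs; repeat match goal with |- context[Rcase_abs ?x] => destruct (Rcase_abs x) end; lra.
Qed.

Lemma ctn_max0 f x : ctn f x -> ctn (fun y => Rmax 0 (f y)) x.
Proof.
  intros Hf eta He. destruct (Hf eta He) as [e [He1 H1]]. exists e. split. auto.
  intros y Hy Hn. specialize (H1 y Hy Hn). generalize (Rmax0_lip (f y) (f x)). lra.
Qed.

Lemma ctn_ext f g x e0 : 0 < e0 -> (forall y, Dp y -> vnorm (vsub y x) <= e0 -> f y = g y) ->
  f x = g x -> ctn g x -> ctn f x.
Proof.
  intros He0 Heq Hx Hg eta He. destruct (Hg eta He) as [e [He1 H1]].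
  exists (Rmin e e0). split. apply Rmin_glb_lt; lra. intros y Hy Hn.
  rewrite Heq, Hx; auto. apply H1; auto. generalize (Rmin_l e e0); lra.
  generalize (Rmin_r e e0); lra.
Qed.

Lemma ctn_le f x : ctn f x -> forall eta, 0 < eta -> exists e, 0 < e /\
  forall y, Dp y -> vnorm (vsub y x) <= e -> f y <= f x + eta.
Proof.
  intros Hf eta He. destruct (Hf eta He) as [e [He1 H1]]. exists e. split; auto.
  intros. generalize (Rle_abs (f y - f x)) (H1 y H H0). lra.
Qed.

Lemma ctn_pow2 f x : ctn f x -> ctn (fun y => f y ^ 2) x.
Proof.
  intros. apply ctn_ext with (e0 := 1) (g := fun y => f y * f y). lra.
  intros; simpl; ring. simpl; ring. apply ctn_mult; auto.
Qed.

Lemma div_nonneg a b : 0 <= a -> 0 < b -> 0 <= a / b.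
Proof. intros. apply Rmult_le_pos; auto. left; apply Rinv_0_lt_compat; auto. Qed.

Lemma dpl_plus f g t a b : derivable_pt_lim f t a -> derivable_pt_lim g t b ->
  derivable_pt_lim (fun s => f s + g s) t (a + b).
Proof. apply derivable_pt_lim_plus. Qed.
Lemma dpl_minus f g t a b : derivable_pt_lim f t a -> derivable_pt_lim g t b ->
  derivable_pt_lim (fun s => f s - g s) t (a - b).
Proof. apply derivable_pt_lim_minus. Qed.
Lemma dpl_mult f g t a b : derivable_pt_lim f t a -> derivable_pt_lim g t b ->
  derivable_pt_lim (fun s => f s * g s) t (a * g t + f t * b).
Proof. apply derivable_pt_lim_mult. Qed.
Lemma dpl_scal c f t a : derivable_pt_lim f t a ->
  derivable_pt_lim (fun s => c * f s) t (c * a).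
Proof. apply derivable_pt_lim_scal. Qed.
Lemma dpl_const c t : derivable_pt_lim (fun _ => c) t 0.
Proof. apply derivable_pt_lim_const. Qed.
Lemma dpl_id t : derivable_pt_lim (fun s => s) t 1.
Proof. apply derivable_pt_lim_id. Qed.
Lemma dpl_div f g t a b : derivable_pt_lim f t a -> derivable_pt_lim g t b -> g t <> 0 ->
  derivable_pt_lim (fun s => f s / g s) t ((a * g t - b * f t) / (g t)²).
Proof. apply derivable_pt_lim_div. Qed.

Lemma deriv_zero_min f t l : (forall s, 0 <= s -> 0 <= f s) -> 0 < t -> f t = 0 ->
  derivable_pt_lim f t l -> l = 0.
Proof.
  intros Hnn Ht Hf Hd. destruct (Rtotal_order l 0) as [Hl|[Hl|Hl]]; auto; exfalso.
  - destruct (Hd (- l / 2) ltac:(lra)) as [del Hdel]. assert (0 < del) by apply cond_pos.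
    set (h := del / 2). assert (Hq := Hdel h ltac:(unfold h; apply Rgt_not_eq; lra) ltac:(unfold h; rewrite Rabs_right; lra)).
    rewrite Hf in Hq. assert (0 <= f (t + h)) by (apply Hnn; unfold h; lra).
    assert (0 <= (f (t + h) - 0) / h) by (apply div_nonneg; [lra | unfold h; lra]).
    generalize (Rle_abs ((f (t + h) - 0) / h - l)). lra.
  - destruct (Hd (l / 2) ltac:(lra)) as [del Hdel]. assert (0 < del) by apply cond_pos.
    set (h := - Rmin (del / 2) (t / 2)).
    assert (Hm1 := Rmin_l (del / 2) (t / 2)). assert (Hm2 := Rmin_r (del / 2) (t / 2)).
    assert (Hm3 : 0 < Rmin (del / 2) (t / 2)) by (apply Rmin_glb_lt; lra).
    assert (Hq := Hdel h ltac:(unfold h; apply Rlt_not_eq; lra) ltac:(unfold h; rewrite Rabs_Ropp, Rabs_right; lra)).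
    rewrite Hf in Hq. assert (0 <= f (t + h)) by (apply Hnn; unfold h; lra).
    assert ((f (t + h) - 0) / h <= 0).
    { unfold h. unfold Rdiv. rewrite Rinv_opp.
      assert (0 <= / Rmin (del / 2) (t / 2)) by (left; apply Rinv_0_lt_compat; lra).
      assert (0 <= (f (t + - Rmin (del / 2) (t / 2)) - 0) * / Rmin (del / 2) (t / 2)).
      { apply Rmult_le_pos; auto. fold h. lra. }
      lra. }
    generalize (Rle_abs (- ((f (t + h) - 0) / h - l))). rewrite Rabs_Ropp. lra.
Qed.

Lemma quot_bound1 a h e : h <> 0 -> Rabs ((a - 0) / h - 0) < e -> Rabs (a - 0) < e * Rabs h.
Proof.
  intros Hh H. rewrite !Rminus_0_r in *. unfold Rdiv in H. rewrite Rabs_mult, Rabs_inv in H.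
  assert (0 < Rabs h) by (apply Rabs_pos_lt; auto).
  apply Rmult_lt_compat_r with (r := Rabs h) in H; auto.
  rewrite Rmult_assoc, Rinv_l in H by lra. lra.
Qed.

Lemma quot_bound2 b h eps : h <> 0 -> Rabs (b - 0) < eps * Rabs h -> Rabs ((b - 0) / h - 0) < eps.
Proof.
  intros Hh H. rewrite !Rminus_0_r in *. unfold Rdiv. rewrite Rabs_mult, Rabs_inv.
  assert (0 < Rabs h) by (apply Rabs_pos_lt; auto).
  apply Rmult_lt_reg_r with (Rabs h); auto. rewrite Rmult_assoc, Rinv_l by lra. lra.
Qed.

Section Model.
Variables (p : Params) (theta alpha betas : R).
Hypothesis Hp : params_ok p.
Hypothesis Hds : deltaM p <= deltas p.
Hypothesis Hth : 0 < theta.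
Hypothesis HR : Rth p theta < 1.
Hypothesis Hal : 0 < alpha.
Hypothesis Hbs : 0 < betas.

Definition Rt := Rth p theta.
Definition rho := 1 / (1 + gammas p * theta).
Definition pp := 2 * betaE p / (deltaF p * (1 + Rt)).
Definition ww := alpha * (1 - Rt) / (1 + Rt).
Definition k1 := (nuE p + deltaE p) * (1 - Rt) / (1 + Rt).
Definition k2 := betaE p * (1 - Rt) / (1 + Rt).
Definition dd := k1 / (2 * (1 - nu p) * nuE p).
Definition cc := Rmin (Rmin (k1 / 2) (k2 / pp)) (Rmin (deltaM p) (betas / alpha)).

Definition Phi (M S : R) := (S - theta * M) ^ 2 / (S + theta * M).
Definition Phix (M S : R) := - (S - theta * M) * (3 * S + theta * M) / (S + theta * M) ^ 2.
Definition Phiy (M S : R) := (S - theta * M) * (S + 3 * theta * M) / (S + theta * M) ^ 2.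

Definition Vl (x : V4) := vE x + pp * vF x + dd * vM x + ww * Phi (vM x) (vMs x).

Lemma Rt_pos : 0 < Rt.
Proof.
  destruct Hp as (H1 & H2 & H3 & H4 & H5 & H6 & H7 & H8 & H9).
  unfold Rt, Rth, Defs.R0. apply Rdiv_lt_0_compat. apply Rdiv_lt_0_compat.
  apply Rmult_lt_0_compat. apply Rmult_lt_0_compat; lra. lra.
  apply Rmult_lt_0_compat; lra. nra.
Qed.

Lemma consts_pos : 0 < pp /\ 0 < ww /\ 0 < k1 /\ 0 < k2 /\ 0 < dd /\ 0 < cc.
Proof.
  destruct Hp as (H1 & H2 & H3 & H4 & H5 & H6 & H7 & H8 & H9).
  assert (HRt := Rt_pos). fold Rt in HR.
  assert (0 < pp) by (unfold pp; apply Rdiv_lt_0_compat; nra).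
  assert (0 < ww) by (unfold ww; apply Rdiv_lt_0_compat; nra).
  assert (0 < k1) by (unfold k1; apply Rdiv_lt_0_compat; nra).
  assert (0 < k2) by (unfold k2; apply Rdiv_lt_0_compat; nra).
  assert (0 < dd) by (unfold dd; apply Rdiv_lt_0_compat; nra).
  repeat split; auto.
  unfold cc. apply Rmin_glb_lt; apply Rmin_glb_lt; try lra.
  apply Rdiv_lt_0_compat; lra. apply Rdiv_lt_0_compat; lra.
Qed.

Lemma Phi_nonneg M S : 0 <= M -> 0 <= S -> 0 <= Phi M S.
Proof.
  intros. unfold Phi. destruct (Req_dec (S + theta * M) 0) as [E|E].
  unfold Rdiv. rewrite E, Rinv_0, Rmult_0_r. lra.
  apply div_nonneg. apply pow2_ge_0. nra.
Qed.

Lemma key_ineq x : Dp x -> vM x + vMs x <> 0 ->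
  lin 1 (dd + ww * theta * Phix (vM x) (vMs x)) pp (ww * Phiy (vM x) (vMs x))
      (Xcl p theta alpha betas x) <= - cc * Vl x.
Proof.
  destruct Hp as (H1 & H2 & H3 & H4 & H5 & H6 & H7 & H8 & H9).
  destruct (consts_pos) as (Hpp & Hww & Hk1 & Hk2 & Hdd & Hcc).
  assert (HRt := Rt_pos). assert (HR' : Rt < 1) by exact HR.
  destruct x as [E M F S]. unfold Dp; simpl. intros (HE & HM & HF & HS) Hne.
  unfold Xcl, lin, Vl, u, G; simpl.
  destruct (Req_EM_T (M + S) 0) as [Hc|_]; [contradiction|].
  assert (HMS : 0 < M + S) by lra.
  assert (Hs : 0 < S + theta * M) by nra.
  assert (Hmg : 0 < M + gammas p * S) by nra.
  assert (H3t : 0 < 3 * theta * M + S) by nra.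
  assert (Hgt : 0 < 1 + gammas p * theta) by nra.
  set (A := (1 - nu p) * nuE p * E - deltaM p * M).
  set (Gv := gammas p * psi p theta * E * (theta * M + S) ^ 2 /
      (alpha * (M + gammas p * S) * (3 * theta * M + S)) +
      ((1 - nu p) * nuE p * theta * E - theta * deltaM p * M) * (theta * M + 3 * S) /
      (3 * theta * M + S) + deltas p * S + betas / alpha * (theta * M - S)).
  set (cross := pp * nu p * nuE p * gammas p * rho * E * (S - theta * M) / (M + gammas p * S)).
  set (Q := (S - theta * M) ^ 2 * (S + 3 * theta * M) / (S + theta * M) ^ 2).
  assert (I1 : ww * (theta * Phix M S * A + Phiy M S * (Gv - deltas p * S)) =
     cross - ww * (betas / alpha) * Q).
  { unfold ww, cross, Q, Gv, Phix, Phiy, A, psi, pp, rho. fold Rt.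
    field. repeat split; try lra. }
  assert (I2 : pp * (nu p * nuE p * E * (M / (M + gammas p * S)) - deltaF p * F) =
     pp * nu p * nuE p * rho * E - pp * deltaF p * F - cross).
  { unfold cross, rho. field. lra. }
  assert (I3 : pp * nu p * nuE p * rho = (nuE p + deltaE p) - k1).
  { assert (HRe : betaE p * nu p * nuE p * rho = Rt * (deltaF p * (nuE p + deltaE p))).
    { unfold rho, Rt, Rth, Defs.R0. field. repeat split; nra. }
    replace (pp * nu p * nuE p * rho) with (2 / (deltaF p * (1 + Rt)) * (betaE p * nu p * nuE p * rho))
      by (unfold pp; field; lra).
    rewrite HRe. unfold k1. field. lra. }
  assert (I4 : betaE p - pp * deltaF p = - k2).
  { unfold pp, k2. field. lra. }
  assert (I5 : dd * ((1 - nu p) * nuE p) = k1 / 2).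
  { unfold dd. field. lra. }
  assert (XE : betaE p * F * (1 - E / K p) - (nuE p + deltaE p) * E <= betaE p * F - (nuE p + deltaE p) * E).
  { assert (0 <= betaE p * F * (E / K p)) by (apply Rmult_le_pos; [nra| apply div_nonneg; lra]). nra. }
  set (mm := Rmin (deltaM p) (betas / alpha)).
  assert (Hmm1 : mm <= deltaM p) by apply Rmin_l.
  assert (Hmm2 : mm <= betas / alpha) by apply Rmin_r.
  assert (Hba : 0 < betas / alpha) by (apply Rdiv_lt_0_compat; lra).
  assert (HPhi := Phi_nonneg M S HM HS).
  assert (Hmm0 : 0 < mm) by (unfold mm; apply Rmin_glb_lt; lra).
  assert (HQ : Phi M S <= Q).
  { unfold Q, Phi. replace ((S - theta * M) ^ 2 * (S + 3 * theta * M) / (S + theta * M) ^ 2) with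
      ((S - theta * M) ^ 2 / (S + theta * M) * ((S + 3 * theta * M) / (S + theta * M))) by (field; lra).
    assert (1 <= (S + 3 * theta * M) / (S + theta * M)).
    { apply Rmult_le_reg_r with (S + theta * M). lra. unfold Rdiv. rewrite Rmult_assoc, Rinv_l by lra. nra. }
    fold (Phi M S). nra. }
  assert (HT : ww * (theta * Phix M S * A + Phiy M S * (Rmax 0 Gv - deltas p * S)) <=
      cross - ww * mm * Phi M S).
  { destruct (Rle_dec 0 Gv) as [HG|HG].
    - rewrite Rmax_right by lra. rewrite I1.
      assert (mm * Phi M S <= betas / alpha * Q) by (apply Rmult_le_compat; lra).
      nra.
    - rewrite Rmax_left by lra.
      destruct (Rlt_dec S (theta * M)) as [Hlt|Hge].
      + assert (Phiy M S <= 0).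
        { unfold Phiy. unfold Rdiv. assert (0 < / (S + theta * M) ^ 2) by (apply Rinv_0_lt_compat; nra).
          assert (0 <= S + 3 * theta * M) by nra. 
          assert ((S - theta * M) * (S + 3 * theta * M) <= 0) by nra. nra. }
        assert (Heq : ww * (theta * Phix M S * A + Phiy M S * (0 - deltas p * S)) =
                ww * (theta * Phix M S * A + Phiy M S * (Gv - deltas p * S)) - ww * Phiy M S * Gv) by ring.
        rewrite Heq, I1.
        assert (mm * Phi M S <= betas / alpha * Q) by (apply Rmult_le_compat; lra).
        assert (0 <= Phiy M S * Gv) by nra. nra.
      + assert (Hcr : 0 <= cross).
        { unfold cross. apply div_nonneg; [|lra].
          assert (0 < rho) by (unfold rho; apply Rdiv_lt_0_compat; lra).
          assert (0 <= S - theta * M) by lra.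
          repeat apply Rmult_le_pos. all: try lra. all: apply Rlt_le, Rinv_0_lt_compat; nra. }
        assert (HPx : Phix M S <= 0).
        { unfold Phix. unfold Rdiv. assert (0 < / (S + theta * M) ^ 2) by (apply Rinv_0_lt_compat; nra).
          assert (0 <= (S - theta * M) * (3 * S + theta * M)) by nra. nra. }
        assert (HPy : 0 <= S * Phiy M S).
        { unfold Phiy. unfold Rdiv. assert (0 < / (S + theta * M) ^ 2) by (apply Rinv_0_lt_compat; nra).
          assert (0 <= (S - theta * M) * (S + 3 * theta * M)) by nra.
          assert (0 <= S * ((S - theta * M) * (S + 3 * theta * M))) by nra. nra. }
        assert (Eul : theta * M * Phix M S + S * Phiy M S = Phi M S).
        { unfold Phix, Phiy, Phi. field. lra. }
        assert (theta * Phix M S * A = Phix M S * (theta * (1 - nu p) * nuE p * E) - deltaM p * (theta * M * Phix M S))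
          by (unfold A; ring).
        assert (Phix M S * (theta * (1 - nu p) * nuE p * E) <= 0).
        { assert (0 <= theta * (1 - nu p) * nuE p * E) by (repeat apply Rmult_le_pos; lra). nra. }
        assert (deltaM p * (S * Phiy M S) <= deltas p * (S * Phiy M S)) by (apply Rmult_le_compat_r; lra).
        assert (mm * Phi M S <= deltaM p * Phi M S) by (apply Rmult_le_compat_r; lra).
        assert (theta * Phix M S * A + Phiy M S * (0 - deltas p * S) <= - mm * Phi M S) by nra.
        assert (ww * (theta * Phix M S * A + Phiy M S * (0 - deltas p * S)) <= ww * (- mm * Phi M S))
          by (apply Rmult_le_compat_l; lra).
        lra. }
  assert (HA : dd * A = k1 / 2 * E - dd * deltaM p * M).
  { unfold A. rewrite <- I5. ring. }
  assert (Hfin : (betaE p * F - (nuE p + deltaE p) * E) + dd * A +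
      (pp * nu p * nuE p * rho * E - pp * deltaF p * F - cross) + (cross - ww * mm * Phi M S)
      = - (k1 / 2) * E - k2 * F - dd * deltaM p * M - ww * mm * Phi M S).
  { rewrite HA.
    assert (E1 : pp * nu p * nuE p * rho * E = ((nuE p + deltaE p) - k1) * E) by (rewrite <- I3; ring).
    assert (E2 : pp * deltaF p * F = (betaE p + k2) * F).
    { replace (betaE p + k2) with (pp * deltaF p) by lra. ring. }
    rewrite E1, E2. lra. }
  assert (Hc1 : cc <= k1 / 2) by (unfold cc; generalize (Rmin_l (Rmin (k1 / 2) (k2 / pp)) (Rmin (deltaM p) (betas / alpha)))
     (Rmin_l (k1/2) (k2/pp)); lra).
  assert (Hc2 : cc <= k2 / pp) by (unfold cc; generalize (Rmin_l (Rmin (k1 / 2) (k2 / pp)) (Rmin (deltaM p) (betas / alpha)))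
     (Rmin_r (k1/2) (k2/pp)); lra).
  assert (Hc3 : cc <= mm) by (unfold cc, mm; apply Rmin_r).
  assert (Hc4 : cc <= deltaM p) by lra.
  assert (cc * pp <= k2) by (apply Rmult_le_reg_r with (/ pp); [apply Rinv_0_lt_compat; lra|];
    rewrite Rmult_assoc, Rinv_r by lra; lra).
  assert (cc * E <= k1 / 2 * E) by (apply Rmult_le_compat_r; lra).
  assert (cc * pp * F <= k2 * F) by (apply Rmult_le_compat_r; lra).
  assert (cc * (dd * M) <= deltaM p * (dd * M)) by (apply Rmult_le_compat_r; nra).
  assert (cc * (ww * Phi M S) <= mm * (ww * Phi M S)) by (apply Rmult_le_compat_r; nra).
  rewrite <- I2 in Hfin.
  replace ((theta * M + S) * ((theta * M + S) * 1)) with ((theta*M+S)^2) by ring.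
  fold Gv. lra.
Qed.


Lemma Phi_le M S : 0 <= M -> 0 <= S -> Phi M S <= S + theta * M.
Proof.
  intros. unfold Phi. destruct (Req_dec (S + theta * M) 0) as [E|E].
  unfold Rdiv. rewrite E, Rinv_0, Rmult_0_r. lra.
  assert (0 < S + theta * M) by nra.
  apply Rmult_le_reg_r with (S + theta * M). lra.
  unfold Rdiv. rewrite Rmult_assoc, Rinv_l by lra.
  assert (0 <= S*(theta*M)) by (apply Rmult_le_pos; nra). nra.
Qed.

Lemma S_le_Phi M S : 0 <= M -> 0 <= S -> S <= 2 * theta * M + 6 * Phi M S.
Proof.
  intros. assert (HP := Phi_nonneg M S H H0).
  destruct (Rle_dec S (2 * theta * M)). nra.
  assert (0 < S + theta * M) by nra. unfold Phi in *.
  assert (S <= 6 * ((S - theta * M) ^ 2 / (S + theta * M))).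
  { apply Rmult_le_reg_r with (S + theta * M). lra.
    replace (6 * ((S - theta * M) ^ 2 / (S + theta * M)) * (S + theta * M)) with
      (6 * (S - theta * M) ^ 2) by (field; lra). nra. }
  nra.
Qed.

Definition hh (a b : R) := a * b / (a + b).

Lemma Phi_hh M S : 0 <= M -> 0 <= S -> Phi M S = S + theta * M - 4 * hh (theta * M) S.
Proof.
  intros. unfold Phi, hh. destruct (Req_dec (S + theta * M) 0) as [E|E].
  - assert (S = 0) by nra. assert (M = 0) by nra. subst. unfold Rdiv.
    replace (0 + theta * 0) with 0 by ring. replace (theta * 0 + 0) with 0 by ring.
    rewrite Rinv_0. ring.
  - field. intro; apply E; lra.
Qed.

Lemma hh_lip1 a b y : 0 <= a -> 0 <= b -> 0 <= y -> Rabs (hh a y - hh b y) <= Rabs (a - b).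
Proof.
  intros. unfold hh. destruct (Req_dec y 0) as [E|E].
  - subst. replace (a * 0 / (a + 0) - b * 0 / (b + 0)) with 0 by (unfold Rdiv; ring). rewrite Rabs_R0. apply Rabs_pos.
  - assert (0 < a + y) by lra. assert (0 < b + y) by lra.
    replace (a * y / (a + y) - b * y / (b + y)) with ((a - b) * (y * y / ((a + y) * (b + y))))
      by (field; lra).
    rewrite Rabs_mult. 
    assert (0 <= y * y / ((a + y) * (b + y)) <= 1).
    { split. apply div_nonneg. nra. nra.
      apply Rmult_le_reg_r with ((a + y) * (b + y)). nra.
      unfold Rdiv. rewrite Rmult_assoc, Rinv_l by nra. nra. }
    rewrite (Rabs_right (y * y / ((a + y) * (b + y)))) by lra.
    generalize (Rabs_pos (a - b)). nra.
Qed.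

Lemma hh_sym a b : hh a b = hh b a.
Proof. unfold hh. rewrite Rplus_comm. unfold Rdiv. ring. Qed.

Lemma hh_lip a1 b1 a2 b2 : 0 <= a1 -> 0 <= b1 -> 0 <= a2 -> 0 <= b2 ->
  Rabs (hh a1 b1 - hh a2 b2) <= Rabs (a1 - a2) + Rabs (b1 - b2).
Proof.
  intros. replace (hh a1 b1 - hh a2 b2) with ((hh a1 b1 - hh a2 b1) + (hh b1 a2 - hh b2 a2))
    by (rewrite (hh_sym b1 a2), (hh_sym b2 a2); ring).
  generalize (Rabs_triang (hh a1 b1 - hh a2 b1) (hh b1 a2 - hh b2 a2))
   (hh_lip1 a1 a2 b1 H H1 H0) (hh_lip1 b1 b2 a2 H0 H2 H1). lra.
Qed.

Lemma Phi_lip M1 S1 M2 S2 : 0 <= M1 -> 0 <= S1 -> 0 <= M2 -> 0 <= S2 ->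
  Rabs (Phi M1 S1 - Phi M2 S2) <= 5 * (theta * Rabs (M1 - M2) + Rabs (S1 - S2)).
Proof.
  intros. rewrite (Phi_hh M1 S1), (Phi_hh M2 S2) by auto.
  assert (H3 := hh_lip (theta * M1) S1 (theta * M2) S2 ltac:(nra) H0 ltac:(nra) H2).
  replace (theta * M1 - theta * M2) with (theta * (M1 - M2)) in H3 by ring.
  rewrite Rabs_mult, (Rabs_right theta) in H3 by lra.
  replace (S1 + theta * M1 - 4 * hh (theta * M1) S1 - (S2 + theta * M2 - 4 * hh (theta * M2) S2)) with
    ((S1 - S2) + theta * (M1 - M2) - 4 * (hh (theta * M1) S1 - hh (theta * M2) S2)) by ring.
  generalize (Rabs_triang ((S1 - S2) + theta * (M1 - M2)) (- (4 * (hh (theta * M1) S1 - hh (theta * M2) S2))))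
    (Rabs_triang (S1 - S2) (theta * (M1 - M2))).
  rewrite Rabs_Ropp, !Rabs_mult, (Rabs_right theta), (Rabs_right 4) by lra.
  generalize (Rabs_pos (M1 - M2)) (Rabs_pos (S1 - S2)). intros. unfold Rminus at 1. nra.
Qed.

Definition Lv := 1 + pp + dd + 5 * ww * (theta + 1).

Lemma V_lip x y : Dp x -> Dp y -> Rabs (Vl x - Vl y) <= 4 * Lv * vnorm (vsub x y).
Proof.
  destruct (consts_pos) as (Hpp & Hww & Hk1 & Hk2 & Hdd & Hcc).
  intros (H1 & H2 & H3 & H4) (H5 & H6 & H7 & H8). unfold Vl.
  assert (HP := Phi_lip (vM x) (vMs x) (vM y) (vMs y) H2 H4 H6 H8).
  generalize (vE_le (vsub x y)) (vM_le (vsub x y)) (vF_le (vsub x y)) (vMs_le (vsub x y)).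
  rewrite vsubE, vsubM, vsubF, vsubMs. intros.
  replace (vE x + pp * vF x + dd * vM x + ww * Phi (vM x) (vMs x) -
    (vE y + pp * vF y + dd * vM y + ww * Phi (vM y) (vMs y))) with
    ((vE x - vE y) + pp * (vF x - vF y) + dd * (vM x - vM y) + ww * (Phi (vM x) (vMs x) - Phi (vM y) (vMs y)))
    by ring.
  set (a := vE x - vE y) in *. set (b := vF x - vF y) in *. set (c := vM x - vM y) in *.
  set (d := Phi (vM x) (vMs x) - Phi (vM y) (vMs y)) in *. set (e := vMs x - vMs y) in *.
  set (n := vnorm (vsub x y)) in *.
  generalize (Rabs_triang (a + pp * b + dd * c) (ww * d)) (Rabs_triang (a + pp * b) (dd * c))
    (Rabs_triang a (pp * b)).
  rewrite !Rabs_mult, (Rabs_right pp), (Rabs_right dd), (Rabs_right ww) by lra.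
  intros. unfold Lv.
  assert (pp * Rabs b <= pp * n) by (apply Rmult_le_compat_l; lra).
  assert (dd * Rabs c <= dd * n) by (apply Rmult_le_compat_l; lra).
  assert (ww * Rabs d <= ww * (5 * (theta * n + n))).
  { apply Rmult_le_compat_l. lra. assert (theta * Rabs c <= theta * n) by (apply Rmult_le_compat_l; lra). lra. }
  assert (0 <= n) by apply vnorm_ge0.
  assert (HL : (1 + pp + dd + 5 * ww * (theta + 1)) * n = n + pp * n + dd * n + ww * (5 * (theta * n + n))) by ring.
  assert (0 <= (1 + pp + dd + 5 * ww * (theta + 1)) * n) by (apply Rmult_le_pos; nra).
  lra.
Qed.

Lemma V_nonneg x : Dp x -> 0 <= Vl x.
Proof.
  destruct (consts_pos) as (Hpp & Hww & Hk1 & Hk2 & Hdd & Hcc).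
  intros (H1 & H2 & H3 & H4). unfold Vl. generalize (Phi_nonneg _ _ H2 H4). nra.
Qed.

Definition Cl := 1 + 1 / pp + (1 + 2 * theta) / dd + 6 / ww.
Definition Cu := 1 + pp + dd + ww * (1 + theta).

Lemma V_lower x : Dp x -> vnorm x <= Cl * Vl x.
Proof.
  destruct (consts_pos) as (Hpp & Hww & Hk1 & Hk2 & Hdd & Hcc).
  intros Hx. assert (HV := V_nonneg x Hx). destruct Hx as (H1 & H2 & H3 & H4).
  assert (HP := Phi_nonneg _ _ H2 H4). assert (HS := S_le_Phi _ _ H2 H4).
  apply Rle_trans with (vE x + vM x + vF x + vMs x).
  { generalize (vnorm_le_sum x). rewrite !Rabs_right by lra. lra. }
  unfold Vl in *.
  assert (0 <= pp * vF x) by nra. assert (0 <= dd * vM x) by nra. assert (0 <= ww * Phi (vM x) (vMs x)) by nra.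
  set (V := vE x + pp * vF x + dd * vM x + ww * Phi (vM x) (vMs x)) in *.
  assert (vF x <= V / pp).
  { apply Rmult_le_reg_r with pp. lra. unfold Rdiv. rewrite Rmult_assoc, Rinv_l by lra. unfold V; lra. }
  assert (vM x <= V / dd).
  { apply Rmult_le_reg_r with dd. lra. unfold Rdiv. rewrite Rmult_assoc, Rinv_l by lra. unfold V; lra. }
  assert (Phi (vM x) (vMs x) <= V / ww).
  { apply Rmult_le_reg_r with ww. lra. unfold Rdiv. rewrite Rmult_assoc, Rinv_l by lra. unfold V; lra. }
  unfold Cl. replace ((1 + 1 / pp + (1 + 2 * theta) / dd + 6 / ww) * V) with
    (V + V / pp + (1 + 2 * theta) * (V / dd) + 6 * (V / ww)) by (field; lra).
  assert (2 * theta * vM x <= 2 * theta * (V / dd)) by (apply Rmult_le_compat_l; lra).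
  assert (vE x <= V) by (unfold V; lra).
  lra.
Qed.

Lemma V_upper x : Dp x -> Vl x <= 4 * Cu * vnorm x.
Proof.
  destruct (consts_pos) as (Hpp & Hww & Hk1 & Hk2 & Hdd & Hcc).
  intros Hx. destruct Hx as (H1 & H2 & H3 & H4).
  assert (HP := Phi_le _ _ H2 H4).
  generalize (vE_le x) (vM_le x) (vF_le x) (vMs_le x). rewrite !Rabs_right by lra. intros.
  unfold Vl, Cu. set (n := vnorm x) in *.
  assert (pp * vF x <= pp * n) by (apply Rmult_le_compat_l; lra).
  assert (dd * vM x <= dd * n) by (apply Rmult_le_compat_l; lra).
  assert (ww * Phi (vM x) (vMs x) <= ww * (n + theta * n)).
  { apply Rle_trans with (ww * (vMs x + theta * vM x)). apply Rmult_le_compat_l; lra.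
    apply Rmult_le_compat_l. lra. assert (theta * vM x <= theta * n) by (apply Rmult_le_compat_l; lra). lra. }
  assert (0 <= n) by apply vnorm_ge0.
  assert (HL : (1 + pp + dd + ww * (1 + theta)) * n = n + pp * n + dd * n + ww * (n + theta * n)) by ring.
  assert (0 <= (1 + pp + dd + ww * (1 + theta)) * n) by (apply Rmult_le_pos; nra).
  lra.
Qed.


Definition Gf (y : V4) : R :=
  gammas p * psi p theta * vE y * (theta * vM y + vMs y) ^ 2
      / (alpha * (vM y + gammas p * vMs y) * (3 * theta * vM y + vMs y))
    + ((1 - nu p) * nuE p * theta * vE y - theta * deltaM p * vM y) * (theta * vM y + 3 * vMs y)
      / (3 * theta * vM y + vMs y)
    + deltas p * vMs y
    + betas / alpha * (theta * vM y - vMs y).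

Lemma ctn_Xcl c1 c2 c3 c4 x : Dp x -> vM x + vMs x <> 0 ->
  ctn (fun y => lin c1 c2 c3 c4 (Xcl p theta alpha betas y)) x.
Proof.
  destruct Hp as (H1 & H2 & H3 & H4 & H5 & H6 & H7 & H8 & H9).
  intros (HE & HM & HF & HS) Hne.
  assert (HMS : 0 < vM x + vMs x) by lra.
  set (e0 := (vM x + vMs x) / 4).
  assert (He0 : 0 < e0) by (unfold e0; lra).
  apply ctn_ext with (e0 := e0) (g := fun y =>
    c1 * (betaE p * vF y * (1 - vE y / K p) - (nuE p + deltaE p) * vE y) +
    c2 * ((1 - nu p) * nuE p * vE y - deltaM p * vM y) +
    c3 * (nu p * nuE p * vE y * (vM y / (vM y + gammas p * vMs y)) - deltaF p * vF y) +
    c4 * (Rmax 0 (Gf y) - deltas p * vMs y)).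
  - auto.
  - intros y Hy Hn. destruct Hy as (HE' & HM' & HF' & HS').
    generalize (vM_le (vsub y x)) (vMs_le (vsub y x)). rewrite vsubM, vsubMs. intros.
    assert (vM y + vMs y <> 0).
    { generalize (Rle_abs (vM x - vM y)) (Rle_abs (vMs x - vMs y)).
      rewrite (Rabs_minus_sym (vM x)), (Rabs_minus_sym (vMs x)). unfold e0 in Hn. lra. }
    unfold lin, Xcl, u, G, Gf; simpl. destruct (Req_EM_T (vM y + vMs y) 0); [contradiction|]. reflexivity.
  - unfold lin, Xcl, u, G, Gf; simpl. destruct (Req_EM_T (vM x + vMs x) 0); [contradiction|]. reflexivity.
  - unfold Gf.
    repeat first [apply ctn_minus | apply ctn_plus | apply ctn_div | apply ctn_inv | apply ctn_opp | apply ctn_mult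
      | apply ctn_max0 | apply ctn_E | apply ctn_M | apply ctn_F | apply ctn_Ms | apply ctn_const
      | apply ctn_pow2].
    all: try (apply Rgt_not_eq; nra).
    all: try (apply Rgt_not_eq; apply Rmult_lt_0_compat; [apply Rmult_lt_0_compat|]; nra).
Qed.

Lemma V_deriv_A z t d : has_deriv z t d -> vM (z t) + vMs (z t) <> 0 -> Dp (z t) ->
  derivable_pt_lim (fun s => Vl (z s)) t
    (lin 1 (dd + ww * theta * Phix (vM (z t)) (vMs (z t))) pp (ww * Phiy (vM (z t)) (vMs (z t))) d).
Proof.
  intros (HE & HM & HF & HS) Hne (H1 & H2 & H3 & H4).
  assert (Hw : vMs (z t) + theta * vM (z t) <> 0) by (apply Rgt_not_eq; nra).
  assert (Hu := dpl_minus _ _ _ _ _ HS (dpl_scal theta _ _ _ HM)).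
  assert (Hv := dpl_plus _ _ _ _ _ HS (dpl_scal theta _ _ _ HM)).
  assert (Huu := dpl_mult _ _ _ _ _ Hu Hu).
  assert (Hq := dpl_div _ _ _ _ _ Huu Hv Hw).
  assert (Htot := dpl_plus _ _ _ _ _ (dpl_plus _ _ _ _ _ (dpl_plus _ _ _ _ _ HE (dpl_scal pp _ _ _ HF))
     (dpl_scal dd _ _ _ HM)) (dpl_scal ww _ _ _ Hq)).
  match type of Htot with derivable_pt_lim ?f _ ?l => apply (derivable_pt_lim_ext f);
    [intro s; unfold Vl, Phi, Rdiv; simpl; ring
    | replace (lin _ _ _ _ d) with l; [exact Htot|]] end.
  unfold lin, Phix, Phiy, Rsqr. field. exact Hw.
Qed.

Lemma V_deriv z t d : (forall s, 0 <= s -> Dp (z s)) -> 0 < t -> has_deriv z t d ->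
  filippov_set (Xcl p theta alpha betas) (z t) d ->
  exists D, derivable_pt_lim (fun s => Vl (z s)) t D /\ D <= - cc * Vl (z t).
Proof.
  destruct Hp as (H1 & H2 & H3 & H4 & H5 & H6 & H7 & H8 & H9).
  intros Hz Ht Hd Hf. assert (Hzt := Hz t ltac:(lra)).
  destruct (Req_dec (vM (z t) + vMs (z t)) 0) as [E0|Hne].
  -
    destruct Hd as (HE & HM & HF & HS). destruct Hzt as (Z1 & Z2 & Z3 & Z4).
    assert (HM0 : vM (z t) = 0) by lra. assert (HS0 : vMs (z t) = 0) by lra.
    assert (dM0 : vM d = 0) by (apply (deriv_zero_min (fun s => vM (z s)) t); auto; intros; apply Hz; auto).
    assert (HMc : forall sg, lin 0 sg 0 0 d <= sg * ((1 - nu p) * nuE p * vE (z t) - deltaM p * vM (z t))).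
    { intro sg. apply filippov_lin with (X := Xcl p theta alpha betas) (x := z t); auto.
      intros eta Heta. 
      assert (Hc : ctn (fun y => lin 0 sg 0 0 (Xcl p theta alpha betas y)) (z t)).
      { apply ctn_ext with (e0 := 1) (g := fun y => sg * ((1 - nu p) * nuE p * vE y - deltaM p * vM y)). lra.
        intros; unfold lin, Xcl; simpl; ring. unfold lin, Xcl; simpl; ring.
        apply ctn_mult. apply ctn_const. apply ctn_minus; apply ctn_mult; try apply ctn_const; auto using ctn_E, ctn_M. }
      destruct (ctn_le _ _ Hc eta Heta) as [e [He Hy]]. exists e. split; auto. intros y Hy1 Hy2.
      specialize (Hy y Hy1 Hy2). cbv beta in Hy. unfold lin, Xcl in Hy |- *. simpl in Hy |- *.
      lra. }
    assert (HE0 : vE (z t) = 0).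
    { generalize (HMc 1) (HMc (-1)). unfold lin. rewrite dM0, HM0. intros.
      assert ((1 - nu p) * nuE p * vE (z t) = 0) by lra.
      assert (0 < (1 - nu p) * nuE p) by nra. nra. }
    assert (dE0 : vE d = 0) by (apply (deriv_zero_min (fun s => vE (z s)) t); auto; intros; apply Hz; auto).
    assert (HEc : forall sg, lin sg 0 0 0 d <= sg * (betaE p * vF (z t) * (1 - vE (z t) / K p) - (nuE p + deltaE p) * vE (z t))).
    { intro sg. apply filippov_lin with (X := Xcl p theta alpha betas) (x := z t); auto.
      intros eta Heta.
      assert (Hc : ctn (fun y => lin sg 0 0 0 (Xcl p theta alpha betas y)) (z t)).
      { apply ctn_ext with (e0 := 1) (g := fun y => sg * (betaE p * vF y * (1 - vE y / K p) - (nuE p + deltaE p) * vE y)). lra.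
        intros; unfold lin, Xcl; simpl; ring. unfold lin, Xcl; simpl; ring.
        repeat first [apply ctn_minus | apply ctn_plus | apply ctn_div | apply ctn_mult
          | apply ctn_E | apply ctn_M | apply ctn_F | apply ctn_Ms | apply ctn_const].
        lra. }
      destruct (ctn_le _ _ Hc eta Heta) as [e [He Hy]]. exists e. split; auto. intros y Hy1 Hy2.
      specialize (Hy y Hy1 Hy2). cbv beta in Hy. unfold lin, Xcl in Hy |- *. simpl in Hy |- *.
      lra. }
    assert (HF0 : vF (z t) = 0).
    { generalize (HEc 1) (HEc (-1)). unfold lin. rewrite dE0, HE0. intros.
      assert (Hb0 : betaE p * vF (z t) * (1 - 0 / K p) = 0) by lra.
      unfold Rdiv in Hb0. rewrite Rmult_0_l, Rminus_0_r, Rmult_1_r in Hb0. nra. }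
    assert (dF0 : vF d = 0) by (apply (deriv_zero_min (fun s => vF (z s)) t); auto; intros; apply Hz; auto).
    assert (dS0 : vMs d = 0) by (apply (deriv_zero_min (fun s => vMs (z s)) t); auto; intros; apply Hz; auto).
    assert (HV0 : Vl (z t) = 0).
    { unfold Vl, Phi. rewrite HE0, HM0, HF0, HS0. unfold Rdiv. 
      replace (0 + theta * 0) with 0 by ring. rewrite Rinv_0. ring. }
    exists 0. split; [| rewrite HV0; lra].
    intros eps Heps.
    set (e4 := eps / (4 * (4 * Lv))).
    assert (HLv : 0 < Lv) by (unfold Lv; destruct consts_pos as (? & ? & ? & ? & ? & ?); nra).
    assert (He4 : 0 < e4) by (unfold e4; apply Rdiv_lt_0_compat; lra).
    destruct (HE e4 He4) as [d1 Hd1]. destruct (HM e4 He4) as [d2 Hd2].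
    destruct (HF e4 He4) as [d3 Hd3]. destruct (HS e4 He4) as [d4 Hd4].
    assert (Ht2 : 0 < t / 2) by lra.
    exists (mkposreal (Rmin (Rmin (Rmin d1 d2) (Rmin d3 d4)) (t / 2))
      ltac:(repeat apply Rmin_glb_lt; try apply cond_pos; lra)).
    simpl. intros h Hh0 Hh.
    generalize (Rmin_l (Rmin (Rmin d1 d2) (Rmin d3 d4)) (t / 2)) (Rmin_r (Rmin (Rmin d1 d2) (Rmin d3 d4)) (t / 2))
      (Rmin_l (Rmin d1 d2) (Rmin d3 d4)) (Rmin_r (Rmin d1 d2) (Rmin d3 d4))
      (Rmin_l d1 d2) (Rmin_r d1 d2) (Rmin_l d3 d4) (Rmin_r d3 d4). intros.
    specialize (Hd1 h Hh0 ltac:(lra)). specialize (Hd2 h Hh0 ltac:(lra)).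
    specialize (Hd3 h Hh0 ltac:(lra)). specialize (Hd4 h Hh0 ltac:(lra)).
    rewrite HE0, dE0 in Hd1. rewrite HM0, dM0 in Hd2. rewrite HF0, dF0 in Hd3. rewrite HS0, dS0 in Hd4.
    assert (Hzh : Dp (z (t + h))) by (apply Hz; generalize (Rabs_le_between' h 0 (t/2)) || idtac;
       assert (Rabs h < t / 2) by lra; generalize (Rle_abs (- h)); rewrite Rabs_Ropp; lra).
    assert (HL := V_lip (z (t + h)) (z t) Hzh (Hz t ltac:(lra))).
    rewrite HV0 in HL.
    assert (Hn := vnorm_le_sum (vsub (z (t + h)) (z t))).
    rewrite vsubE, vsubM, vsubF, vsubMs, HE0, HM0, HF0, HS0 in Hn.
    rewrite HV0.
    apply quot_bound2; auto.
    apply quot_bound1 in Hd1; auto. apply quot_bound1 in Hd2; auto.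
    apply quot_bound1 in Hd3; auto. apply quot_bound1 in Hd4; auto.
    apply Rle_lt_trans with (4 * Lv * (Rabs (vE (z (t + h)) - 0) + Rabs (vM (z (t + h)) - 0) +
       Rabs (vF (z (t + h)) - 0) + Rabs (vMs (z (t + h)) - 0))).
    { apply Rle_trans with (1 := HL). apply Rmult_le_compat_l. lra. exact Hn. }
    replace (eps * Rabs h) with (4 * Lv * (4 * e4 * Rabs h)) by (unfold e4; field; lra).
    apply Rmult_lt_compat_l. lra. lra.
  - assert (Hder := V_deriv_A z t d Hd Hne Hzt).
    eexists. split. exact Hder.
    apply filippov_lin with (X := Xcl p theta alpha betas) (x := z t); auto.
    intros eta Heta.
    destruct (ctn_le _ _ (ctn_Xcl 1 (dd + ww * theta * Phix (vM (z t)) (vMs (z t))) pp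
       (ww * Phiy (vM (z t)) (vMs (z t))) (z t) Hzt Hne) eta Heta) as [e [He Hy]].
    exists e. split; auto. intros y Hy1 Hy2. specialize (Hy y Hy1 Hy2). cbv beta in Hy.
    generalize (key_ineq (z t) Hzt Hne). lra.
Qed.

Definition Wf (z : R -> V4) (s : R) := (1 + cc * s) * Vl (z s).

Lemma W_lip z T : filippov_solution (Xcl p theta alpha betas) z -> 0 < T ->
  exists L, 0 <= L /\ forall s t, 0 <= s <= T -> 0 <= t <= T ->
    Rabs (Wf z s - Wf z t) <= L * Rabs (s - t).
Proof.
  destruct (consts_pos) as (Hpp & Hww & Hk1 & Hk2 & Hdd & Hcc).
  assert (HLv : 0 < Lv) by (unfold Lv; nra).
  intros (Hz & Hlip & _) HT. destruct (Hlip T HT) as [Lz HLz].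
  set (L1 := 4 * Lv * Rabs Lz).
  assert (HL1 : 0 <= L1) by (unfold L1; generalize (Rabs_pos Lz); nra).
  assert (HV : forall s t, 0 <= s <= T -> 0 <= t <= T -> Rabs (Vl (z s) - Vl (z t)) <= L1 * Rabs (s - t)).
  { intros. apply Rle_trans with (1 := V_lip _ _ (Hz s ltac:(lra)) (Hz t ltac:(lra))).
    assert (vnorm (vsub (z s) (z t)) <= Rabs Lz * Rabs (s - t)).
    { apply Rle_trans with (Lz * Rabs (s - t)). apply HLz; auto.
      apply Rmult_le_compat_r. apply Rabs_pos. apply Rle_abs. }
    unfold L1. replace (4 * Lv * Rabs Lz * Rabs (s - t)) with (4 * Lv * (Rabs Lz * Rabs (s - t))) by ring.
    apply Rmult_le_compat_l; lra. }
  set (B := Vl (z 0) + L1 * T).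
  assert (HB : forall t, 0 <= t <= T -> 0 <= Vl (z t) <= B).
  { intros. split. apply V_nonneg, Hz; lra.
    generalize (HV t 0 H ltac:(lra)). rewrite Rminus_0_r, (Rabs_right t) by lra. intro.
    generalize (Rle_abs (Vl (z t) - Vl (z 0))). unfold B.
    assert (L1 * t <= L1 * T) by (apply Rmult_le_compat_l; lra). lra. }
  exists ((1 + cc * T) * L1 + cc * B). split.
  { assert (0 <= B) by (generalize (HB 0 ltac:(lra)); lra).
    assert (0 <= 1 + cc * T) by nra. nra. }
  intros s t Hs Ht. unfold Wf.
  replace ((1 + cc * s) * Vl (z s) - (1 + cc * t) * Vl (z t)) with
    ((1 + cc * s) * (Vl (z s) - Vl (z t)) + cc * (s - t) * Vl (z t)) by ring.
  apply Rle_trans with (1 := Rabs_triang _ _).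
  rewrite !Rabs_mult. rewrite (Rabs_right (1 + cc * s)) by nra. rewrite (Rabs_right cc) by lra.
  rewrite (Rabs_right (Vl (z t))) by (generalize (HB t Ht); lra).
  assert (H1 : (1 + cc * s) * Rabs (Vl (z s) - Vl (z t)) <= (1 + cc * T) * (L1 * Rabs (s - t))).
  { apply Rmult_le_compat. nra. apply Rabs_pos. nra. apply HV; auto. }
  assert (H2 : cc * Rabs (s - t) * Vl (z t) <= cc * Rabs (s - t) * B).
  { apply Rmult_le_compat_l. generalize (Rabs_pos (s - t)); nra. generalize (HB t Ht); lra. }
  assert (Heq : ((1 + cc * T) * L1 + cc * B) * Rabs (s - t) =
     (1 + cc * T) * (L1 * Rabs (s - t)) + cc * Rabs (s - t) * B) by ring.
  lra.
Qed.

Lemma W_deriv z t : filippov_solution (Xcl p theta alpha betas) z -> 0 < t ->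
  (exists d, has_deriv z t d /\ filippov_set (Xcl p theta alpha betas) (z t) d) ->
  exists D, derivable_pt_lim (Wf z) t D /\ D <= 0.
Proof.
  destruct (consts_pos) as (Hpp & Hww & Hk1 & Hk2 & Hdd & Hcc).
  intros (Hz & _ & _) Ht [d [Hd Hf]].
  destruct (V_deriv z t d Hz Ht Hd Hf) as [D [HD HDle]].
  assert (Hl := dpl_plus _ _ _ _ _ (dpl_const 1 t) (dpl_scal cc _ _ _ (dpl_id t))).
  assert (HW := dpl_mult _ _ _ _ _ Hl HD).
  eexists. split. exact HW.
  assert (0 <= Vl (z t)) by (apply V_nonneg, Hz; lra).
  assert ((1 + cc * t) * D <= (1 + cc * t) * (- cc * Vl (z t))) by (apply Rmult_le_compat_l; nra).
  assert (0 <= cc * t * (cc * Vl (z t))) by (repeat apply Rmult_le_pos; lra).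
  nra.
Qed.

Lemma W_decr z b : filippov_solution (Xcl p theta alpha betas) z -> 0 <= b -> Wf z b <= Wf z 0.
Proof.
  intros Hsol Hb. destruct (Req_dec b 0) as [E|E]. subst; lra.
  destruct (W_lip z b Hsol ltac:(lra)) as [L [HL Hlip]].
  assert (Hab : forall a, 0 < a <= b -> Wf z b <= Wf z a).
  { intros a Ha. pose proof Hsol as (Hz & Hl & Hnull).
    apply (mono_lemma (Wf z) a b L (fun t => 0 <= t /\ ~ (exists d, has_deriv z t d /\
       filippov_set (Xcl p theta alpha betas) (z t) d)) ltac:(lra) HL).
    - intros. apply Hlip; lra.
    - exact Hnull.
    - intros t Ht HN. apply W_deriv; auto. lra.
      apply NNPP. intro Hc. apply HN. split. lra. exact Hc. }
  apply Rnot_lt_le. intro Hlt.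
  set (a := Rmin b ((Wf z b - Wf z 0) / (2 * (L + 1)))).
  assert (Ha : 0 < a) by (unfold a; apply Rmin_glb_lt; [lra| apply Rdiv_lt_0_compat; lra]).
  assert (Ha1 : a <= b) by apply Rmin_l.
  assert (Ha2 : a <= (Wf z b - Wf z 0) / (2 * (L + 1))) by apply Rmin_r.
  specialize (Hab a (conj Ha Ha1)).
  assert (H1 := Hlip a 0 ltac:(lra) ltac:(lra)). rewrite Rminus_0_r, (Rabs_right a) in H1 by lra.
  assert (L * a <= (Wf z b - Wf z 0) / 2).
  { apply Rle_trans with ((L + 1) * a). nra.
    apply Rle_trans with ((L + 1) * ((Wf z b - Wf z 0) / (2 * (L + 1)))). apply Rmult_le_compat_l; lra.
    right. field. lra. }
  generalize (Rle_abs (Wf z a - Wf z 0)). lra.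
Qed.

Lemma GAS_main : GAS_filippov (Xcl p theta alpha betas) Dp.
Proof.
  destruct (consts_pos) as (Hpp & Hww & Hk1 & Hk2 & Hdd & Hcc).
  assert (HCl : 0 < Cl).
  { unfold Cl. assert (0 < 1 / pp) by (apply Rdiv_lt_0_compat; lra).
    assert (0 < (1 + 2 * theta) / dd) by (apply Rdiv_lt_0_compat; lra).
    assert (0 < 6 / ww) by (apply Rdiv_lt_0_compat; lra). lra. }
  assert (HCu : 0 < Cu) by (unfold Cu; nra).
  assert (Key : forall z t, filippov_solution (Xcl p theta alpha betas) z -> 0 <= t ->
     (1 + cc * t) * Vl (z t) <= Vl (z 0)).
  { intros z t Hs Ht. generalize (W_decr z t Hs Ht). unfold Wf. lra. }
  split.
  - intros eps Heps. exists (eps / (4 * Cl * Cu)). split.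
    apply Rdiv_lt_0_compat; nra.
    intros z Hs H0 Hn t Ht.
    pose proof Hs as (Hz & Hr).
    assert (K1 := Key z t Hs ltac:(lra)).
    assert (HVt := V_nonneg (z t) (Hz t ltac:(lra))).
    assert (0 <= cc * t * Vl (z t)) by (repeat apply Rmult_le_pos; lra).
    assert (Vl (z t) <= Vl (z 0)) by nra.
    assert (HL := V_lower (z t) (Hz t ltac:(lra))).
    assert (HU := V_upper (z 0) H0).
    assert (Cl * Vl (z 0) <= Cl * (4 * Cu * vnorm (z 0))) by (apply Rmult_le_compat_l; lra).
    assert (H3 : Cl * (4 * Cu) * vnorm (z 0) < Cl * (4 * Cu) * (eps / (4 * Cl * Cu))).
    { apply Rmult_lt_compat_l. nra. exact Hn. }
    replace (Cl * (4 * Cu) * (eps / (4 * Cl * Cu))) with eps in H3 by (field; lra).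
    assert (Cl * Vl (z t) <= Cl * Vl (z 0)) by (apply Rmult_le_compat_l; lra).
    nra.
  - intros z Hs H0 eps Heps.
    assert (HV0 := V_nonneg (z 0) H0).
    exists (Cl * Vl (z 0) / (cc * eps)). intros t Ht.
    assert (HT0 : 0 <= Cl * Vl (z 0) / (cc * eps)) by (apply div_nonneg; nra).
    pose proof Hs as (Hz & Hr).
    assert (K1 := Key z t Hs ltac:(lra)).
    assert (HVt := V_nonneg (z t) (Hz t ltac:(lra))).
    assert (HL := V_lower (z t) (Hz t ltac:(lra))).
    assert (Cl * Vl (z 0) <= cc * eps * t).
    { apply Rmult_le_reg_r with (/ (cc * eps)). apply Rinv_0_lt_compat; nra.
      replace (cc * eps * t * / (cc * eps)) with t by (field; lra). exact Ht. }
    assert (Cl * ((1 + cc * t) * Vl (z t)) <= Cl * Vl (z 0)) by (apply Rmult_le_compat_l; lra).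
    assert (Hfin : Cl * Vl (z t) * (1 + cc * t) < eps * (1 + cc * t)) by nra.
    apply Rmult_lt_reg_r in Hfin; [|nra]. lra.
Qed.

End Model.

Theorem theorem4 (p : Params) (theta alpha betas : R) :
  params_ok p ->
  deltaM p <= deltas p ->
  0 < theta -> Rth p theta < 1 ->
  0 < alpha -> 0 < betas ->
  GAS_filippov (Xcl p theta alpha betas) Dp.
Proof.
  intros. apply GAS_main; auto.
Qed.
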